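(* There exists a fully-dynamic bin packing algorithm under general movement costs with asymptotic competitive ratio $2$ and additive term $1+\log_2 n$, using constant worst-case recourse, where $n$ is the maximum number of items present at any time and is known to the algorithm in advance.
   Context: Fully-dynamic bin packing: items (size $s_i\in[0,1]$, arbitrary movement cost $c_i\ge0$) are inserted and deleted; at each time $t$ the algorithm maintains a packing of the current items $\mathcal{I}_t$ into unit bins, paying $c_i$ each time it moves item $i$. It has asymptotic competitive ratio $\alpha'$ with additive term $\beta$ if it always uses at most $\alpha'\cdot OPT(\mathcal{I}_t)+\beta$ bins ($OPT$ the optimal number of bins), and worst-case recourse $\gamma$ if at each update it incurs movement cost at most $\gamma\cdot c_t$, $c_t$ being the cost of the item updated. *)

(* Defs.v *)
From mathcomp Require Import all_boot all_order all_algebra.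
From mathcomp Require Import reals exp.
Set Implicit Arguments. Unset Strict Implicit. Unset Printing Implicit Defensive.
Import Order.TTheory GRing.Theory Num.Theory.
Local Open Scope ring_scope.

(** The update at position [t]
  (time [t], 0-based) is either [Ins s c] (insert a new item of size [s]
  and movement cost [c]; the item is identified by its insertion time [t])
  or [Del j] (delete the item inserted at time [j]). *)

Inductive update (R : Type) : Type :=
| Ins of R & R
| Del of nat.

Arguments Del {R}.

Section BinPacking.
Variable R : realType.

Definition is_ins (u : update R) : bool :=
  if u is Ins _ _ then true else false.

Definition is_del_of (j : nat) (u : update R) : bool :=
  if u is Del k then k == j else false.

Definition upd (s : seq (update R)) (t : nat) : update R := nth (Del 0) s t.

Definition active (s : seq (update R)) (t : nat) : seq nat :=
  [seq j <- iota 0 t | is_ins (upd s j) && ~~ has (is_del_of j) (take t s)].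

Definition item_size (s : seq (update R)) (j : nat) : R :=
  if upd s j is Ins a _ then a else 0.
Definition item_cost (s : seq (update R)) (j : nat) : R :=
  if upd s j is Ins _ c then c else 0.

Definition update_cost (s : seq (update R)) (t : nat) : R :=
  match upd s t with
  | Ins _ c => c
  | Del j => item_cost s j
  end.

Definition valid_seq (s : seq (update R)) : Prop :=
  forall t, (t < size s)%N ->
    match upd s t with
    | Ins a c => 0 <= a <= 1 /\ 0 <= c
    | Del j => j \in active s t
    end.

Definition max_items (s : seq (update R)) : nat :=
  \max_(t < (size s).+1) size (active s t).

Definition packing := nat -> nat.

Definition feasible (sz : nat -> R) (A : seq nat) (P : packing) : Prop :=
  forall b : nat, \sum_(j <- A | P j == b) sz j <= 1.

Definition bins_used (A : seq nat) (P : packing) : nat :=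
  size (undup [seq P j | j <- A]).

Definition fits (sz : nat -> R) (A : seq nat) (k : nat) : Prop :=
  exists P : packing, feasible sz A P /\ forall j, j \in A -> (P j < k)%N.

Definition is_OPT (sz : nat -> R) (A : seq nat) (k : nat) : Prop :=
  fits sz A k /\ forall k', fits sz A k' -> (k <= k')%N.

Definition move_cost (s : seq (update R)) (t : nat) (P Q : packing) : R :=
  \sum_(j <- active s t | (j \in active s t.+1) && (P j != Q j)) item_cost s j.

End BinPacking.

(** An online algorithm: given the advance knowledge [n] and the prefix of
    updates seen so far, it outputs the current packing.  Being a function
    of the prefix only, it is online by construction. *)
Definition algorithm (R : realType) := nat -> seq (update R) -> packing.

Definition log2 (R : realType) (x : R) : R := ln x / ln 2.

(* Main.v *)
Require Import Defs.
From mathcomp Require Import all_boot all_order all_algebra.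
From mathcomp Require Import reals exp.
From mathcomp Require Import sequences.
From mathcomp Require Import ring lra zify.
Import Order.TTheory GRing.Theory Num.Theory.
Local Open Scope ring_scope.


Section Key.
Context {R : realType}.

Definition key (c : R) : R :=
  if 0 < c then expR ((Num.floor (ln c / ln 2))%:~R * ln 2) else 0.

Lemma ln2_pos : 0 < ln (2 : R).
Proof. apply: ln_gt0; lra. Qed.

Lemma key_ge0 c : 0 <= key c.
Proof. rewrite /key; case: ifP => _ //; exact: expR_ge0. Qed.

Lemma key_le c : 0 <= c -> key c <= c.
Proof.
move=> c0; rewrite /key; case: ifP => // cp.
rewrite -{2}(lnK (x:=c)) ?posrE // ler_expR.
have h := floor_le (ln c / ln 2).
have l2 := ln2_pos.
rewrite -ler_pdivlMr //.
Qed.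

Lemma key_lt2 c : 0 <= c -> c <= 2 * key c.
Proof.
move=> c0; rewrite /key; case: ifP => cp; last first.
  have -> : c = 0 by apply/eqP; rewrite eq_le c0 leNgt cp. by rewrite mulr0.
have l2 := ln2_pos.
rewrite -{1}(lnK (x:=c)) ?posrE //.
have e2 : (2:R) = expR (ln 2) by rewrite lnK // posrE; lra.
rewrite [X in _ <= X * _]e2 -expRD ler_expR.
have h := floorD1_gt (ln c / ln 2).
rewrite intrD in h.
have : ln c / ln 2 * ln 2 <= ((Num.floor (ln c / ln 2))%:~R + 1) * ln 2.
  by rewrite ler_pM2r //; apply: ltW.
rewrite mulfVK; last by rewrite gt_eqF.
lra.
Qed.

Lemma key_gap a b : key a < key b -> 2 * key a <= key b.
Proof.
rewrite /key; case: (ifP (0 < a)) => ap; last by rewrite mulr0 => /ltW.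
case: ifP => bp; last by rewrite ltNge expR_ge0.
rewrite ltr_expR => h.
have l2 := ln2_pos.
rewrite ltr_pM2r // ltr_int in h.
have h2 : ((Num.floor (ln a / ln 2))%:~R + 1) * ln 2 <= (Num.floor (ln b / ln 2))%:~R * ln 2 :> R.
  rewrite ler_pM2r //; have : (Num.floor (ln a / ln 2) + 1 <= Num.floor (ln b / ln 2))%R by lia.
  by rewrite -(ler_int R) intrD.
rewrite -{1}(lnK (x:=2)) ?posrE; last lra.
rewrite mulrC -expRD ler_expR; lra.
Qed.

End Key.
Arguments key_gap {R a b}.


Section Lists.
Context {R : realType}.
Notation E := (nat * R)%type.
Notation kk := (fun e : E => key e.2).

Definition geK (a b : E) := kk b <= kk a.
Definition gtK (a b : E) := kk b < kk a.

Lemma geK_trans : transitive geK.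
Proof. by move=> a b c; rewrite /geK => h1 h2; apply: le_trans h2 h1. Qed.
Lemma gtK_trans : transitive gtK.
Proof. by move=> a b c; rewrite /gtK => h1 h2; apply: lt_trans h2 h1. Qed.

Fixpoint push (c : E) (l : seq E) : seq E :=
  match l with
  | [::] => [:: c]
  | y :: l' => if kk c <= kk y then y :: push c l' else c :: push y l'
  end.

Fixpoint mv (c : E) (l : seq E) : seq E :=
  match l with
  | [::] => [::]
  | y :: l' => if kk c <= kk y then mv c l' else y :: mv y l'
  end.

Lemma push_perm c l : perm_eq (push c l) (c :: l).
Proof.
elim: l c => [|y l IH] c //=.
case: ifP => _; apply/permP => p /=.
  by rewrite (permP (IH c)) /= addnCA.
by rewrite (permP (IH y)) /= addnCA.
Qed.

Lemma push_sorted c l : sorted geK l -> sorted geK (push c l).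
Proof.
elim: l c => [|y l IH] c //= sl.
have sl' : sorted geK l by apply: (path_sorted sl).
move: sl; rewrite (path_sortedE geK_trans) => /andP[ay _].
case: ifP => h.
  rewrite /= (path_sortedE geK_trans) IH // andbT.
  by rewrite (perm_all _ (push_perm c l)) /= ay andbT; exact: h.
rewrite /= (path_sortedE geK_trans) IH // andbT.
rewrite (perm_all _ (push_perm y l)) /= /geK.
have hy : kk y <= kk c by apply: ltW; rewrite ltNge h.
rewrite hy /=.
apply/allP => e el; apply: le_trans hy; exact: (allP ay e el).
Qed.

Lemma push_index c l j : j \in map fst l -> j != c.1 -> j \notin map fst (mv c l) ->
  index j (map fst (push c l)) = index j (map fst l).
Proof.
elim: l c => [|y l IH] c //=.
rewrite inE => jl jc.
case: ifP => h /=.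
  case: eqP => [//|/eqP jy] jm; congr S.
  by apply: IH => //; move: jl; rewrite eq_sym (negbTE jy).
rewrite inE negb_or => /andP[jy jm].
rewrite eq_sym (negbTE jc) eq_sym (negbTE jy); congr S.
by apply: IH => //; move: jl; rewrite (negbTE jy).
Qed.

Lemma mv_path c l : sorted geK l -> path gtK c (mv c l).
Proof.
elim: l c => [|y l IH] c //= sl.
have sl' : sorted geK l by apply: (path_sorted sl).
case: ifP => h; first exact: IH.
by rewrite /= IH // andbT /gtK ltNge h.
Qed.

Lemma mv_sub c l : subseq (mv c l) l.
Proof.
elim: l c => [|y l IH] c; first by [].
have -> : mv c (y :: l) = (if kk c <= kk y then mv c l else y :: mv y l) by [].
case: ifP => _; last by rewrite /= eqxx IH.
apply: subseq_trans (IH c) _; exact: subseq_cons.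
Qed.

Fixpoint fh (l : seq E) : seq E :=
  match l with
  | [::] => [::]
  | y :: l' =>
    match l' with
    | [::] => [:: y]
    | z :: _ => if kk z == kk y then head y (fh l') :: y :: behead (fh l')
                else y :: fh l'
    end
  end.

Fixpoint mvf (l : seq E) : seq E :=
  match l with
  | [::] => [::]
  | y :: l' =>
    match l' with
    | [::] => [:: y]
    | z :: _ => if kk z == kk y then mvf l' else y :: mvf l'
    end
  end.

Lemma fh_step y z l : fh [:: y, z & l] =
  if kk z == kk y then head y (fh (z :: l)) :: y :: behead (fh (z :: l))
  else y :: fh (z :: l).
Proof. by []. Qed.

Lemma mvf_step y z l : mvf [:: y, z & l] =
  if kk z == kk y then mvf (z :: l) else y :: mvf (z :: l).
Proof. by []. Qed.

Lemma fh_perm l : perm_eq (fh l) l.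
Proof.
elim: l => [|y l IH] //.
case: l IH => [|z l] IH; first by [].
rewrite fh_step; case: ifP => _; last by rewrite perm_cons.
case E: (fh (z :: l)) IH => [|h t] IH.
  by have := perm_size IH.
rewrite /=; apply/permP => p /=; have := permP IH p; rewrite /= => H; by rewrite addnCA H.
Qed.

Lemma fh_cons y l : exists h t, fh (y :: l) = h :: t.
Proof.
have := perm_size (fh_perm (y :: l)).
case: (fh (y :: l)) => [|h t] //= _; by exists h, t.
Qed.

Lemma mvf_cons y l : exists h t, mvf (y :: l) = h :: t.
Proof.
elim: l y => [|z l IH] y; first by exists y, [::].
rewrite mvf_step; case: ifP => _; first exact: IH.
by exists y, (mvf (z :: l)).
Qed.

Lemma fh_head y l : head y (fh (y :: l)) = head y (mvf (y :: l)) /\ kk (head y (fh (y :: l))) = kk y.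
Proof.
elim: l y => [|z l IH] y; first by [].
rewrite fh_step mvf_step; case: ifP => /eqP e; last by [].
have [h [t ht]] := fh_cons z l.
have [h' [t' ht']] := mvf_cons z l.
have := IH z; rewrite ht ht' /= e; by [].
Qed.

Lemma mvf_sub l : subseq (mvf l) l.
Proof.
elim: l => [|y l IH]; first by [].
case: l IH => [|z l] IH; first by rewrite /= eqxx.
rewrite mvf_step; case: ifP => _; last by move: IH; move: (mvf (z :: l)) => m; rewrite /= eqxx.
apply: subseq_trans IH _; exact: subseq_cons.
Qed.

Lemma sorted_all_le y l : sorted geK (y :: l) -> forall e, e \in l -> kk e <= kk y.
Proof.
rewrite /= (path_sortedE geK_trans) => /andP[/allP a _] e el; exact: a e el.
Qed.

Lemma fh_sorted l : sorted geK l -> sorted geK (fh l).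
Proof.
elim: l => [|y l IH]; first by [].
case: l IH => [|z l] IH; first by [].
move=> sl; have sl' : sorted geK (z :: l) by apply: (path_sorted sl).
have al := @sorted_all_le y (z :: l) sl.
rewrite fh_step; case: ifP => /eqP e.
  have := IH sl'; have := fh_head z l; have := fh_perm (z :: l).
  case: (fh (z :: l)) => [|h t] pr; first by have := perm_size pr.
  move=> [_ kh] st; rewrite /= in kh st.
  rewrite /=; apply/andP; split; first by rewrite /geK kh e.
  rewrite (path_sortedE geK_trans); apply/andP; split; last exact: path_sorted st.
  apply/allP => w wt; apply: al; rewrite -(perm_mem pr) inE wt orbT //.
rewrite /= (path_sortedE geK_trans) IH // andbT.
apply/allP => w wf; apply: al; by rewrite -(perm_mem (fh_perm (z :: l))).
Qed.

Lemma mvf_sorted l : sorted geK l -> sorted gtK (mvf l).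
Proof.
elim: l => [|y l IH]; first by [].
case: l IH => [|z l] IH; first by [].
move=> sl; have sl' : sorted geK (z :: l) by apply: (path_sorted sl).
have al := @sorted_all_le y (z :: l) sl.
rewrite mvf_step; case: ifP => /eqP e; first exact: IH.
rewrite /= (path_sortedE gtK_trans) IH // andbT.
apply/allP => w wm.
have wz : w \in z :: l by apply: (mem_subseq (mvf_sub _)).
have zy : kk z < kk y by rewrite lt_neqAle; apply/andP; split; [apply/eqP | apply: al; rewrite inE eqxx].
rewrite /gtK; apply: le_lt_trans zy.
move: wz; rewrite inE => /orP[/eqP -> //|wl].
exact: (@sorted_all_le z l sl' _ wl).
Qed.

Lemma fh_index l j : j \in map fst l -> j \notin map fst (mvf l) ->
  index j (map fst (fh l)) = (index j (map fst l)).+1.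
Proof.
elim: l => [|y l IH]; first by [].
case: l IH => [|z l] IH; first by rewrite /= inE => ->.
rewrite fh_step mvf_step; case: ifP => _; last first.
  rewrite [map _ (y :: _)]/= [map _ (y :: mvf _)]/= !inE negb_or => /orP[/eqP ->|jl]; first by rewrite eqxx.
  case/andP=> jy jm; rewrite /= eq_sym (negbTE jy) IH //.
move=> jl jm.
have := fh_head z l; have [h' [t' ht']] := mvf_cons z l.
have IH' := IH.
case E: (fh (z :: l)) IH' => [|h t] IH'; first by have := perm_size (fh_perm (z :: l)); rewrite E.
rewrite ht' /= => -[hh _].
have hj : h.1 != j.
  by apply: contra jm => /eqP <-; rewrite ht' hh /= inE eqxx.
rewrite (negbTE hj).
case: (eqVneq y.1 j) => [//|yj].
move: jl; rewrite /= inE eq_sym (negbTE yj) /= => jl.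
by have := IH' jl jm; rewrite /= (negbTE hj) => -[->].
Qed.

Fixpoint del (j : nat) (l : seq E) : seq E :=
  match l with
  | [::] => [::]
  | y :: l' => if y.1 == j then fh l' else y :: del j l'
  end.

Fixpoint mvd (j : nat) (l : seq E) : seq E :=
  match l with
  | [::] => [::]
  | y :: l' => if y.1 == j then mvf l' else mvd j l'
  end.

Lemma del_mem j l e : e \in del j l -> e \in l.
Proof.
elim: l => [|y l IH] //=.
case: ifP => _; first by rewrite (perm_mem (fh_perm l)) inE => ->; rewrite orbT.
by rewrite !inE => /orP[->|/IH ->] //; rewrite orbT.
Qed.

Lemma del_ids j l : uniq (map fst l) ->
  perm_eq (map fst (del j l)) (filter (predC1 j) (map fst l)).
Proof.
elim: l => [|y l IH] //= /andP[yl ul].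
case: ifP => /eqP yj.
  rewrite /= -yj.
  have -> : filter (predC1 y.1) (map fst l) = map fst l.
    apply/all_filterP/allP => k kl /=; apply/eqP => e; move: yl; by rewrite -e kl.
  exact: perm_map (fh_perm l).
by rewrite /= perm_cons IH.
Qed.

Lemma del_sorted j l : sorted geK l -> sorted geK (del j l).
Proof.
elim: l => [|y l IH] //= sl.
have sl' : sorted geK l by apply: (path_sorted sl).
case: ifP => _; first exact: fh_sorted.
rewrite /= (path_sortedE geK_trans) IH // andbT.
apply/allP => w /del_mem wl; exact: (@sorted_all_le y l sl w wl).
Qed.

Lemma del_notin j l : j \notin map fst l -> del j l = l.
Proof.
elim: l => [|y l IH] //=; rewrite inE negb_or => /andP[jy jl].
by rewrite eq_sym (negbTE jy) IH.
Qed.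

Lemma del_index j l k : k != j -> k \in map fst l -> k \notin map fst (mvd j l) ->
  index k (map fst (del j l)) = index k (map fst l).
Proof.
elim: l => [|y l IH] //= kj.
case: ifP => /eqP yj.
  rewrite inE; have yk : y.1 != k by apply/eqP => e; move: kj; rewrite -e yj eqxx.
  rewrite eq_sym (negbTE yk) /= => kl km.
  by rewrite fh_index.
rewrite /= inE => kl km; case: eqP => // ky; congr S; apply: IH => //; move: kl; case: eqP => // e; by move: ky; rewrite e.
Qed.

Lemma mvd_sorted j l : sorted geK l -> sorted gtK (mvd j l).
Proof.
elim: l => [|y l IH] //= sl.
have sl' : sorted geK l by apply: (path_sorted sl).
case: ifP => _; [exact: mvf_sorted | exact: IH].
Qed.

Lemma mvd_sub j l : subseq (mvd j l) l.
Proof.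
elim: l => [|y l IH] //.
have -> : mvd j (y :: l) = if y.1 == j then mvf l else mvd j l by [].
case: ifP => _.
  apply: subseq_trans (mvf_sub l) _; exact: subseq_cons.
apply: subseq_trans IH _; exact: subseq_cons.
Qed.

Lemma mvd_le j l : sorted geK l -> forall e, e \in mvd j l ->
  exists2 x, x \in l & (x.1 == j) && (kk e <= kk x).
Proof.
elim: l => [|y l IH] //= sl e.
have sl' : sorted geK l by apply: (path_sorted sl).
case: ifP => yj.
  move=> em; exists y; first by rewrite inE eqxx.
  rewrite yj /=; apply: (@sorted_all_le y l sl).
  exact: (mem_subseq (mvf_sub l)).
move=> /(IH sl') [x xl xe]; exists x => //; by rewrite inE xl orbT.
Qed.

Lemma chain_sum c L : path gtK c L -> \sum_(e <- L) kk e <= kk c.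
Proof.
elim: L c => [|e L IH] c /=; first by rewrite big_nil key_ge0.
case/andP => ce pe; rewrite big_cons.
have := key_gap ce; have := IH e pe; lra.
Qed.

Lemma sorted_sum L K : 0 <= K -> sorted gtK L -> (forall e, e \in L -> kk e <= K) ->
  \sum_(e <- L) kk e <= 2 * K.
Proof.
case: L => [|e L] K0 /= sL hK; first by rewrite big_nil; lra.
rewrite big_cons; have := @chain_sum e L sL; have := hK e (mem_head _ _); lra.
Qed.

End Lists.


Definition ce (N m : nat) : nat := ((N + m.-1) %/ m)%N.

Lemma ce_gt N m k : (0 < m)%N -> (k < N)%N -> (k %/ m < ce N m)%N.
Proof.
move=> m0 kN; rewrite /ce ltnNge leq_divRL // -ltnNge.
have := leq_divM k m.
nia.
Qed.

Lemma ce_le N m : (0 < m)%N -> (ce N m <= N %/ m + 1)%N.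
Proof.
move=> m0; rewrite /ce.
apply: leq_trans (leq_div2r m (_ : N + m.-1 <= N + m)%N) _; first lia.
by rewrite divnDr ?dvdnn // divnn m0.
Qed.

Lemma ce_1 N : ce N 1 = N.
Proof. by rewrite /ce addn0 divn1. Qed.

Lemma ce_small N m : (0 < m)%N -> (N <= m)%N -> (ce N m <= 1)%N.
Proof.
move=> m0 Nm; rewrite /ce -ltnS ltn_divLR //; lia.
Qed.

Lemma log_bound (R : realType) n : ((trunc_log 2 n)%:R : R) <= log2 (n%:R : R).
Proof.
case: n => [|n]; first by rewrite trunc_log0 /log2 ln0 // mul0r.
have h := trunc_logP (isT : (1 < 2)%N) (isT : (0 < n.+1)%N).
rewrite /log2 ler_pdivlMr; last by apply: ln_gt0; lra.
rewrite mulrC mulr_natr -lnXn; last lra.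
rewrite ler_ln ?posrE ?ltr0n ?expn_gt0 //; last by rewrite exprn_gt0.
by rewrite -natrX ler_nat.
Qed.


Definition Lm (n : nat) : nat := trunc_log 2 n.
Definition NC (n : nat) : nat := (Lm n).+2.

Definition sc {R : realType} (n : nat) (a : R) : nat :=
  find (fun i : nat => ((2:R) ^+ i.+1)^-1 < a) (iota 0 (Lm n).+1).

Definition state (R : realType) := nat -> seq (nat * R).

Definition step {R : realType} (n : nat) (S : state R) (t : nat) (u : update R) : state R :=
  match u with
  | Ins a c => fun i => if i == sc n a then push (t, c) (S i) else S i
  | Del j => fun i => del j (S i)
  end.

Fixpoint st {R : realType} (n : nat) (s : seq (update R)) (k : nat) : state R :=
  match k with
  | 0 => fun _ => [::]
  | k'.+1 => step n (st n s k') k' (upd s k')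
  end.

Definition alg (R : realType) : algorithm R := fun n p j =>
  let i := sc n (item_size p j) in
  ((index j (map fst (st n p (size p) i)) %/ 2 ^ i) * NC n + i)%N.

Section Proofs.
Variable R : realType.
Implicit Types (s : seq (update R)).

Lemma sc_lt n (a : R) : (sc n a < NC n)%N.
Proof. have := find_size (fun i : nat => ((2:R) ^+ i.+1)^-1 < a) (iota 0 (Lm n).+1).
by rewrite size_iota /sc /NC => h; apply: leq_ltn_trans h _. Qed.

Lemma sc_le n (a : R) : a <= 1 -> a <= ((2:R) ^+ sc n a)^-1.
Proof.
move=> a1; case E: (sc n a) => [|i]; first by rewrite expr0 invr1.
have hi : (i < sc n a)%N by rewrite E.
have := before_find 0%N hi.
have ilt : (i < size (iota 0 (Lm n).+1))%N.
  by rewrite size_iota; apply: leq_trans hi (sc_lt n a).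
rewrite nth_iota; last by rewrite size_iota in ilt.
by rewrite add0n => /negbT; rewrite -leNgt.
Qed.

Lemma sc_gt n (a : R) : (sc n a <= Lm n)%N -> ((2:R) ^+ (sc n a).+1)^-1 < a.
Proof.
move=> h.
have hs : has (fun i : nat => ((2:R) ^+ i.+1)^-1 < a) (iota 0 (Lm n).+1).
  by rewrite has_find size_iota.
have := nth_find 0%N hs.
by rewrite nth_iota ?add0n // -/(sc n a).
Qed.

Lemma upd_take s t j : (j < t)%N -> upd (take t s) j = upd s j.
Proof. by move=> jt; rewrite /upd nth_take. Qed.

Lemma item_size_take s t j : (j < t)%N -> item_size (take t s) j = item_size s j.
Proof. by move=> jt; rewrite /item_size upd_take. Qed.

Lemma st_take n s t k : (k <= t)%N -> st n (take t s) k = st n s k.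
Proof.
elim: k => [|k IH] kt //=.
by rewrite IH ?upd_take // ltnW.
Qed.

Lemma active_mem s t j :
  (j \in active s t) = [&& (j < t)%N, is_ins (upd s j) & ~~ has (is_del_of j) (take t s)].
Proof. rewrite /active mem_filter mem_iota add0n leq0n. by case: (j < t)%N; case: is_ins; case: has. Qed.

Lemma active_uniq s t : uniq (active s t).
Proof. exact/filter_uniq/iota_uniq. Qed.

Lemma active_lt s t j : j \in active s t -> (j < t)%N.
Proof. by rewrite active_mem => /and3P[]. Qed.
Arguments active_lt {s t j}.

Lemma take_S s t : (t < size s)%N -> take t.+1 s = rcons (take t s) (upd s t).
Proof. exact: take_nth. Qed.

Lemma no_future_del s t j : valid_seq s -> (t <= size s)%N -> (t <= j)%N ->
  ~~ has (is_del_of j) (take t s).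
Proof.
move=> vs; elim: t => [|t IH] ts tj; first by rewrite take0.
rewrite take_S // has_rcons negb_or (IH (ltnW ts) (ltnW tj)) andbT.
have := vs t ts; case: (upd s t) => [a c _|k]; first by [].
move=> /active_lt kt; rewrite /is_del_of; apply/negP => /eqP e.
move: kt tj; rewrite e; lia.
Qed.

Lemma active_ins s t a c j : valid_seq s -> (t < size s)%N -> upd s t = Ins a c ->
  (j \in active s t.+1) = (j \in active s t) || (j == t).
Proof.
move=> vs ts ut.
rewrite !active_mem take_S // has_rcons ut.
have -> : is_del_of j (Ins a c) = false by [].
rewrite orFb ltnS leq_eqVlt.
case: (eqVneq j t) => [->|_]; last by rewrite orbF.
by rewrite ltnn ut (negbTE (no_future_del s t t vs (ltnW ts) (leqnn t))).
Qed.

Lemma active_del s t j0 j : valid_seq s -> (t < size s)%N -> upd s t = Del j0 ->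
  (j \in active s t.+1) = (j \in active s t) && (j != j0).
Proof.
move=> vs ts ut.
rewrite !active_mem take_S // has_rcons ut.
have -> : is_del_of j (Del j0) = (j0 == j) by [].
rewrite ltnS leq_eqVlt.
case: (eqVneq j t) => [->|_].
  by rewrite ltnn ut.
rewrite negb_or (eq_sym j0 j).
by case: (j < t)%N; case: (is_ins _); case: (j == j0); case: has.
Qed.

Lemma active_ins_val s t j : valid_seq s -> (t <= size s)%N -> j \in active s t ->
  exists a c, [/\ upd s j = Ins a c, 0 <= a <= 1 & 0 <= c].
Proof.
move=> vs ts ja; have jt := active_lt ja.
move: ja; rewrite active_mem => /and3P[_ ii _].
have := vs j (leq_trans jt ts).
by case: (upd s j) ii => // a c _ [h1 h2]; exists a, c.
Qed.
Arguments active_ins_val {s t j}.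

Definition INV n s t := forall i,
  [/\ uniq (map fst (st n s t i)), sorted geK (st n s t i),
     (forall e, e \in st n s t i -> e.2 = item_cost s e.1) &
     forall j, (j \in map fst (st n s t i)) = (j \in active s t) && (sc n (item_size s j) == i)].

Lemma inv_all n s t : valid_seq s -> (t <= size s)%N -> INV n s t.
Proof.
move=> vs; elim: t => [|t IH] ts i.
  split => // j; by rewrite active_mem.
have ts' : (t < size s)%N by [].
have {IH} [u1 u2 u3 u4] := IH (ltnW ts) i.
have -> : st n s t.+1 i = step n (st n s t) t (upd s t) i by [].
case ut: (upd s t) => [a c|j0].
  have sa : item_size s t = a by rewrite /item_size ut.
  have ca : item_cost s t = c by rewrite /item_cost ut.
  rewrite /step.
  case: (eqVneq i (sc n a)) => [ei|ni].
    have pL := perm_map fst (push_perm (t, c) (st n s t i)).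
    split.
    - rewrite (perm_uniq pL) /= u1 andbT; apply/negP; rewrite u4 => /andP[/active_lt]; by rewrite ltnn.
    - exact: push_sorted.
    - move=> e; rewrite (perm_mem (push_perm _ _)) inE => /orP[/eqP -> /=|]; [by rewrite ca | exact: u3].
    - move=> j; rewrite (perm_mem pL) inE u4 (active_ins s t a c j vs ts' ut).
      case: (eqVneq j t) => [->|jt]; last by rewrite orbF.
      by rewrite sa ei eqxx /= orbT.
  split => // j; rewrite u4 (active_ins s t a c j vs ts' ut).
  case: (eqVneq j t) => [->|jt]; last by rewrite orbF.
  by rewrite sa orbT eq_sym (negbTE ni) !andbF.
rewrite /step.
have pL := del_ids j0 _ u1.
split.
- by rewrite (perm_uniq pL) filter_uniq.
- exact: del_sorted.
- by move=> e /del_mem; apply: u3.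
- move=> j; rewrite (perm_mem pL) mem_filter u4 (active_del s t j0 j vs ts' ut) /=.
  by case: (j \in active s t); case: (j != j0); case: (_ == i).
Qed.
Arguments inv_all {n s t}.

Definition Pk n s t j : nat :=
  let i := sc n (item_size s j) in
  ((index j (map fst (st n s t i)) %/ 2 ^ i) * NC n + i)%N.

Lemma alg_take n s t j : (t <= size s)%N -> (j < t)%N -> alg R n (take t s) j = Pk n s t j.
Proof.
move=> ts jt; rewrite /alg /Pk size_takel // st_take // item_size_take //.
Qed.

Lemma sum_le_cond (r : seq nat) (P Q : pred nat) (f : nat -> R) :
  (forall j, j \in r -> P j -> Q j) -> (forall j, j \in r -> 0 <= f j) ->
  \sum_(j <- r | P j) f j <= \sum_(j <- r | Q j) f j.
Proof.
elim: r => [|x r IH] hPQ hf; first by rewrite !big_nil.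
rewrite !big_cons.
have IH' : \sum_(j <- r | P j) f j <= \sum_(j <- r | Q j) f j.
  by apply: IH => j jr; [apply: hPQ | apply: hf]; rewrite inE jr orbT.
have fx := hf x (mem_head _ _).
case Px: (P x); first by rewrite (hPQ x (mem_head _ _) Px); lra.
case: (Q x) => //; lra.
Qed.

Lemma sum_sub_uniq (r1 r2 : seq nat) (f : nat -> R) :
  uniq r1 -> uniq r2 -> (forall j, j \in r2 -> 0 <= f j) ->
  \sum_(j <- r1 | j \in r2) f j <= \sum_(j <- r2) f j.
Proof.
move=> u1 u2 hf.
rewrite -big_filter.
have pe : perm_eq [seq j <- r1 | j \in r2] [seq j <- r2 | j \in r1].
  apply: uniq_perm; try exact: filter_uniq.
  by move=> k; rewrite !mem_filter andbC.
rewrite (perm_big _ pe) big_filter.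
by apply: sum_le_cond.
Qed.

Lemma cost_ge0 s t j : valid_seq s -> (t <= size s)%N -> j \in active s t -> 0 <= item_cost s j.
Proof.
move=> vs ts ja; have [a [c [u _ c0]]] := active_ins_val vs ts ja.
by rewrite /item_cost u.
Qed.
Arguments cost_ge0 {s t j}.

Lemma moved_sum n s t (M : seq (nat * R)) i : valid_seq s -> (t <= size s)%N ->
  subseq M (st n s t i) ->
  \sum_(j <- active s t | j \in map fst M) item_cost s j <= 2 * \sum_(e <- M) key e.2.
Proof.
move=> vs ts sM.
have [u1 u2 u3 u4] := @inv_all n s t vs ts i.
have uM : uniq (map fst M) by apply: subseq_uniq u1; apply: map_subseq.
have Msub : forall e, e \in M -> e \in st n s t i by move=> e; apply: mem_subseq.
have Mact : forall j, j \in map fst M -> j \in active s t.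
  move=> j /(mem_subseq (map_subseq fst sM)); rewrite u4 => /andP[] //.
have h1 := @sum_sub_uniq (active s t) (map fst M) (item_cost s) (active_uniq s t) uM.
have h2 : forall j, j \in map fst M -> 0 <= item_cost s j.
  by move=> j /Mact; apply: cost_ge0.
apply: le_trans (h1 h2) _.
rewrite big_map mulr_sumr big_seq [X in _ <= X]big_seq; apply: ler_sum => e eM.
rewrite -(u3 e (Msub e eM)); apply: key_lt2.
rewrite (u3 e (Msub e eM)); apply: (cost_ge0 vs ts); apply: Mact.
by apply/mapP; exists e.
Qed.
Arguments moved_sum {n s t M i}.

Lemma recourse n s t : valid_seq s -> (t < size s)%N ->
  move_cost s t (alg R n (take t s)) (alg R n (take t.+1 s)) <= 4 * update_cost s t.
Proof.
move=> vs ts.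
have ts1 : (t <= size s)%N := ltnW ts.
rewrite /move_cost.
have -> : \sum_(j <- active s t | (j \in active s t.+1) &&
      (alg R n (take t s) j != alg R n (take t.+1 s) j)) item_cost s j =
    \sum_(j <- active s t | (j \in active s t.+1) && (Pk n s t j != Pk n s t.+1 j)) item_cost s j.
  rewrite big_seq_cond [RHS]big_seq_cond; apply: eq_bigl => j.
  case ja: (j \in active s t) => //=.
  have jt := active_lt ja.
  by rewrite alg_take // alg_take // ltnW.
have INVt := @inv_all n s t vs ts1.
have hf : forall j, j \in active s t -> 0 <= item_cost s j by move=> j; apply: cost_ge0.
have vt := vs t ts.
case ut: (upd s t) vt => [a c|j0] vt.
- set i0 := sc n a.
  set M := mv (t, c) (st n s t i0).
  have [_ u2 _ _] := INVt i0.
  apply: le_trans (sum_le_cond _ _ (fun j : nat => j \in map fst M) _ _ hf) _.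
    move=> j ja /andP[ja' neq]; apply: contraNT neq => jM; apply/eqP.
    rewrite /Pk; move ei: (sc n (item_size s j)) => i.
    have -> : st n s t.+1 i = if i == i0 then push (t, c) (st n s t i) else st n s t i.
      by rewrite /= ut.
    case: eqP => [ei0|_] //.
    have [_ _ _ u4] := INVt i.
    rewrite push_index //.
    + by rewrite u4 ja ei eqxx.
    + by rewrite /=; apply/eqP => e; move: (active_lt ja); rewrite e ltnn.
    + by rewrite ei0.
  apply: le_trans (moved_sum vs ts1 (mv_sub _ _)) _.
  have h1 := chain_sum _ _ (mv_path (t, c) _ u2).
  have c0 : 0 <= c by case: vt.
  have h2 := key_le _ c0.
  rewrite /update_cost ut /=.
  rewrite /= in h1; lra.
- have j0a : j0 \in active s t by [].
  set i0 := sc n (item_size s j0).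
  set M := mvd j0 (st n s t i0).
  have [_ u2 u3 _] := INVt i0.
  apply: le_trans (sum_le_cond _ _ (fun j : nat => j \in map fst M) _ _ hf) _.
    move=> j ja /andP[ja' neq]; apply: contraNT neq => jM; apply/eqP.
    rewrite /Pk; move ei: (sc n (item_size s j)) => i.
    have -> : st n s t.+1 i = del j0 (st n s t i) by rewrite /= ut.
    have [_ _ _ u4] := INVt i.
    case: (eqVneq i i0) => [ei0|ni].
      rewrite del_index //.
      + by move: ja'; rewrite (active_del s t j0 j vs ts ut) => /andP[].
      + by rewrite u4 ja ei eqxx.
      + by rewrite ei0.
    rewrite del_notin //.
    by rewrite u4 j0a /= eq_sym.
  apply: le_trans (moved_sum vs ts1 (mvd_sub _ _)) _.
  set K := key (item_cost s j0).
  have hK : forall e, e \in M -> key e.2 <= K.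
    move=> e eM; have [x xl /andP[/eqP xj ex]] := mvd_le _ _ u2 _ eM.
    by rewrite /K -xj -(u3 x xl).
  have h1 := sorted_sum _ _ (key_ge0 _) (mvd_sorted j0 _ u2) hK.
  have c0 := hf j0 j0a.
  have h2 := key_le _ c0.
  rewrite /update_cost ut -/K.
  lra.
Qed.

Lemma sum_const_cond (r : seq nat) (P : pred nat) (x : R) :
  \sum_(j <- r | P j) x = x *+ count P r.
Proof.
elim: r => [|y r IH]; first by rewrite big_nil.
by rewrite big_cons IH /=; case: (P y); rewrite ?mulrS ?add0n.
Qed.

Lemma opt_lb s t opt (P : packing) :
  feasible (item_size s) (active s t) P -> (forall j, j \in active s t -> (P j < opt)%N) ->
  \sum_(j <- active s t) item_size s j <= opt%:R.
Proof.
move=> fP hP.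
have -> : \sum_(j <- active s t) item_size s j =
    \sum_(j <- active s t) \sum_(0 <= b < opt) (if b == P j then item_size s j else 0).
  rewrite big_seq [RHS]big_seq; apply: eq_bigr => j ja.
  rewrite -big_mkcond /= big_nat1_eq.
  by rewrite leq0n hP.
rewrite exchange_big /=.
apply: le_trans (_ : \sum_(0 <= b < opt) (1:R) <= _); last first.
  by rewrite sumr_const_nat subn0.
apply: ler_sum => b _.
rewrite -big_mkcond /=.
have := fP b.
by under eq_bigl do rewrite eq_sym.
Qed.

Lemma class_count n s t i : valid_seq s -> (t <= size s)%N ->
  count (fun j => sc n (item_size s j) == i) (active s t) = size (st n s t i).
Proof.
move=> vs ts; have [u1 _ _ u4] := @inv_all n s t vs ts i.
have pe : perm_eq (map fst (st n s t i)) [seq j <- active s t | sc n (item_size s j) == i].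
  apply: uniq_perm; first exact: u1.
    by apply: filter_uniq; apply: active_uniq.
  by intro j; rewrite u4 [RHS]mem_filter andbC.
by rewrite -size_filter -(perm_size pe) size_map.
Qed.

Lemma T_lb n s t : valid_seq s -> (t <= size s)%N ->
  \sum_(0 <= i < (Lm n).+1) (size (st n s t i))%:R * ((2:R) ^+ i.+1)^-1
    <= \sum_(j <- active s t) item_size s j.
Proof.
move=> vs ts.
pose w i : R := if (i <= Lm n)%N then ((2:R) ^+ i.+1)^-1 else 0.
have hw : forall j, j \in active s t -> w (sc n (item_size s j)) <= item_size s j.
  move=> j ja; have [a [c [u a01 _]]] := active_ins_val vs ts ja.
  have sa : item_size s j = a by rewrite /item_size u.
  rewrite /w sa; case: ifP => h; last by case/andP: a01.
  exact/ltW/sc_gt.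
apply: le_trans (_ : \sum_(j <- active s t) w (sc n (item_size s j)) <= _); last first.
  by rewrite big_seq [X in _ <= X]big_seq; apply: ler_sum => j ja; apply: hw.
have -> : \sum_(j <- active s t) w (sc n (item_size s j)) =
    \sum_(j <- active s t) \sum_(0 <= i < NC n) (if i == sc n (item_size s j) then w i else 0).
  apply: eq_bigr => j _.
  by rewrite -big_mkcond /= big_nat1_eq leq0n sc_lt.
rewrite exchange_big /=.
rewrite /NC [X in _ <= X]big_nat_recr //=.
have -> : \sum_(j <- active s t) (if (Lm n).+1 == sc n (item_size s j) then w (Lm n).+1 else 0) = 0.
  by rewrite big1 // => j _; rewrite /w ltnn; case: ifP.
rewrite addr0 le_eqVlt; apply/orP; left; apply/eqP.
rewrite big_nat_cond [RHS]big_nat_cond; apply: eq_bigr => i /andP[/andP[_ iL] _].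
rewrite -big_mkcond /= sum_const_cond.
have -> : count (fun j => i == sc n (item_size s j)) (active s t) = size (st n s t i).
  rewrite -(class_count n s t i vs ts); apply: eq_count => j; by rewrite eq_sym.
by rewrite /w -ltnS iL mulr_natl.
Qed.

Lemma bins_le n s t : valid_seq s -> (t <= size s)%N ->
  (bins_used (active s t) (alg R n (take t s)) <=
    \sum_(0 <= i < NC n) ce (size (st n s t i)) (2 ^ i))%N.
Proof.
move=> vs ts.
rewrite /bins_used.
have -> : [seq alg R n (take t s) j | j <- active s t] = [seq Pk n s t j | j <- active s t].
  by apply/eq_in_map => j ja; rewrite alg_take // (active_lt ja).
pose Sl := flatten [seq [seq (q * NC n + i)%N | q <- iota 0 (ce (size (st n s t i)) (2 ^ i))]
            | i <- index_iota 0 (NC n)].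
apply: leq_trans (_ : size (undup [seq Pk n s t j | j <- active s t]) <= size Sl)%N _.
  apply: uniq_leq_size; first exact: undup_uniq.
  move=> x; rewrite mem_undup => /mapP[j ja ->].
  apply/flatten_mapP; exists (sc n (item_size s j)).
    by rewrite mem_index_iota leq0n sc_lt.
  apply: map_f; rewrite mem_iota leq0n add0n.
  apply: ce_gt; first by rewrite expn_gt0.
  have [_ _ _ u4] := @inv_all n s t vs ts (sc n (item_size s j)).
  by rewrite -(size_map fst) index_mem u4 ja eqxx.
rewrite size_flatten sumnE big_map /shape big_map.
by apply: leq_sum => i _; rewrite size_map size_iota.
Qed.

Lemma Pk_dec n s t j : let i := sc n (item_size s j) in
  (Pk n s t j %% NC n = i)%N /\ (Pk n s t j %/ NC n = index j (map fst (st n s t i)) %/ 2 ^ i)%N.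
Proof.
rewrite /Pk /=; have hl := sc_lt n (item_size s j).
split; first by rewrite modnMDl modn_small.
by rewrite divnMDl ?(leq_ltn_trans (leq0n _) hl) // (divn_small hl) addn0.
Qed.

Lemma feas n s t : valid_seq s -> (t <= size s)%N ->
  feasible (item_size s) (active s t) (alg R n (take t s)).
Proof.
move=> vs ts b.
have -> : \sum_(j <- active s t | alg R n (take t s) j == b) item_size s j =
    \sum_(j <- active s t | Pk n s t j == b) item_size s j.
  rewrite big_seq_cond [RHS]big_seq_cond; apply: eq_bigl => j.
  case ja: (j \in active s t) => //=.
  by rewrite alg_take // (active_lt ja).
set i0 := (b %% NC n)%N; set q := (b %/ NC n)%N.
set m := (2 ^ i0)%N.
have m0 : (0 < m)%N by rewrite expn_gt0.
have hcl : forall j, Pk n s t j == b -> sc n (item_size s j) = i0 /\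
     (index j (map fst (st n s t i0)) %/ m = q)%N.
  move=> j /eqP hb; have [h1 h2] := Pk_dec n s t j.
  have e1 : sc n (item_size s j) = i0 by rewrite /i0 -hb h1.
  split => //; by rewrite /q -hb h2 e1.
apply: (@le_trans _ _ (\sum_(j <- active s t | Pk n s t j == b) ((2:R) ^+ i0)^-1)).
  rewrite big_seq_cond [X in _ <= X]big_seq_cond; apply: ler_sum => j /andP[ja hb].
  have [a [c [u a01 _]]] := active_ins_val vs ts ja.
  have [e1 _] := hcl j hb.
  have := @sc_le n a (proj2 (andP a01)).
  have sa : item_size s j = a by rewrite /item_size u.
  by rewrite -e1 sa.
rewrite sum_const_cond.
have [u1 _ _ u4] := @inv_all n s t vs ts i0.
set ids := map fst (st n s t i0).
pose f := [seq j <- active s t | Pk n s t j == b].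
have fids : forall j, j \in f -> j \in ids.
  move=> j; rewrite mem_filter => /andP[hb ja].
  by rewrite u4 ja (proj1 (hcl j hb)) eqxx.
have cnt : (count (fun j => Pk n s t j == b) (active s t) <= m)%N.
  rewrite -size_filter -/f -(size_map (fun j => index j ids)).
  rewrite -(size_iota (q * m) m).
  apply: uniq_leq_size.
    rewrite map_inj_in_uniq; first exact/filter_uniq/active_uniq.
    move=> x y xf yf; apply: (index_inj 0%N); exact: fids.
  move=> v /mapP[j jf ->].
  have := jf; rewrite mem_filter => /andP[hb _].
  have [_ hq] := hcl j hb.
  rewrite mem_iota.
  have := divn_eq (index j ids) m; have := ltn_pmod (index j ids) m0.
  rewrite hq; move: (index j ids %% m)%N => r; move: (index j ids) => w.
  clearbody q m; move: (q * m)%N => Q.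
  move=> rm ->; apply/andP; split; lia.
have p0 : 0 < ((2:R) ^+ i0)^-1 by rewrite invr_gt0 exprn_gt0.
apply: (@le_trans _ _ (((2:R) ^+ i0)^-1 *+ m)).
  by rewrite ler_pMn2l.
have -> : ((2:R) ^+ i0)^-1 *+ m = ((2:R) ^+ i0)^-1 * (2:R) ^+ i0.
  by rewrite /m -natrX mulr_natr.
by rewrite mulVf // expf_neq0 // pnatr_eq0.
Qed.

End Proofs.

Lemma ce_sum n (N : nat -> nat) : (N (Lm n).+1 <= n)%N ->
  (\sum_(0 <= i < NC n) ce (N i) (2 ^ i) <= \sum_(0 <= i < (Lm n).+1) N i %/ 2 ^ i + (Lm n).+1)%N.
Proof.
move=> hN; rewrite /NC big_nat_recr //=.
have h1 : (ce (N (Lm n).+1) (2 ^ (Lm n).+1) <= 1)%N.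
  apply: ce_small; first by rewrite expn_gt0.
  apply: leq_trans hN _; apply: ltnW; exact: trunc_log_ltn.
have h2 : (\sum_(0 <= i < (Lm n).+1) ce (N i) (2 ^ i) <=
           \sum_(0 <= i < (Lm n).+1) N i %/ 2 ^ i + Lm n)%N.
  rewrite !big_nat_recl //= expn0 ce_1 divn1.
  have : (\sum_(0 <= i < Lm n) ce (N i.+1) (2 ^ i.+1) <=
          \sum_(0 <= i < Lm n) (N i.+1 %/ 2 ^ i.+1 + 1))%N.
    by apply: leq_sum => i _; apply: ce_le; rewrite expn_gt0.
  rewrite big_split /= sum_nat_const_nat subn0 muln1; lia.
lia.
Qed.

Lemma G_bound (R : realType) K (N : nat -> nat) :
  ((\sum_(0 <= i < K) N i %/ 2 ^ i)%N%:R : R) <=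
  2 * \sum_(0 <= i < K) (N i)%:R * ((2:R) ^+ i.+1)^-1.
Proof.
rewrite natr_sum mulr_sumr; apply: ler_sum => i _.
have e : 2 * ((N i)%:R * ((2:R) ^+ i.+1)^-1) = (N i)%:R / (2:R) ^+ i.
  rewrite exprS invfM; field; by rewrite expf_neq0 // pnatr_eq0.
rewrite e ler_pdivlMr ?exprn_gt0 //.
by rewrite -natrX -natrM ler_nat leq_divM.
Qed.

Theorem factC1 (R : realType) :
  exists (gamma : R) (A : algorithm R),
  forall (n : nat) (s : seq (update R)),
    valid_seq s -> max_items s = n ->
    (forall t, (t <= size s)%N ->
       feasible (item_size s) (active s t) (A n (take t s)) /\
       forall opt, is_OPT (item_size s) (active s t) opt ->
         (bins_used (active s t) (A n (take t s)))%:R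
           <= 2 * opt%:R + (1 + log2 (n%:R : R))) /\
    (forall t, (t < size s)%N ->
       move_cost s t (A n (take t s)) (A n (take t.+1 s))
         <= gamma * update_cost s t).
Proof.
exists 4, (alg R) => n s vs hn; split; last first.
  by move=> t ts; apply: recourse.
move=> t ts; split; first exact: feas.
move=> opt [[P [fP hP]] _].
have T1 := @opt_lb R s t opt P fP hP.
have T2 := @T_lb R n s t vs ts.
have B := @bins_le R n s t vs ts.
have hN : (size (st n s t (Lm n).+1) <= n)%N.
  rewrite -(@class_count R n s t _ vs ts) -hn.
  apply: leq_trans (count_size _ _) _.
  rewrite /max_items.
  have ts2 : (t < (size s).+1)%N by [].
  exact: (@leq_bigmax _ (fun t0 : 'I_(size s).+1 => size (active s t0)) (Ordinal ts2)).
have C := @ce_sum n (fun i => size (st n s t i)) hN.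
have G := @G_bound R (Lm n).+1 (fun i => size (st n s t i)).
have Lb := @log_bound R n.
set G0 := (\sum_(0 <= i < (Lm n).+1) size (st n s t i) %/ 2 ^ i)%N in C G.
have BB : ((bins_used (active s t) (alg R n (take t s)))%:R : R) <= G0%:R + (Lm n)%:R + 1.
  rewrite -natrD natr1 ler_nat; apply: leq_trans B _; apply: leq_trans C _; lia.
rewrite /Lm in BB; lra.
Qed.
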